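(* Let $a<0$ and $b\in\mathbb{R}$, and put $$C_{a,b}=\max\left\{\frac12,\ \frac{2-a-b}{2(2-a)},\ \frac{2a^2+(2a-1)b+2-3a}{2(1-2a)(2-a)},\ \frac{1-b}{2(1-2a)}\right\}.$$ Then $F_{(a,b)}(t):=2C_{a,b}\,\Phi_{(a-1,1-a,0,b)}(t)-\Phi_{(a,1,-a,-1)}(t)>0$ for all $t>0$.
   Context: For real $\lambda_0,\dots,\lambda_N$, the fundamental function $\Phi_{(\lambda_0,\dots,\lambda_N)}$ is the unique solution $u$ of $\prod_{j=0}^N(\frac{d}{dt}-\lambda_j)u=0$ with $u^{(k)}(0)=0$ for $0\le k\le N-1$ and $u^{(N)}(0)=1$. *)

(* Defs.v *)
From Stdlib Require Import Reals List.
From Coquelicot Require Import Coquelicot.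
Open Scope R_scope.

Definition Dop (l : R) (g : R -> R) : R -> R :=
  fun t => Derive g t - l * g t.

(* prod_{l in ls} (d/dt - l) applied to g (the factors commute on smooth g). *)
Fixpoint Lop (ls : list R) (g : R -> R) : R -> R :=
  match ls with
  | nil => g
  | l :: ls' => Dop l (Lop ls' g)
  end.

(* u is the fundamental function Phi_(lambda_0,...,lambda_N) where
   ls = [lambda_0; ...; lambda_N] (so N = length ls - 1):
   u is a (smooth) solution on R of prod_j (d/dt - lambda_j) u = 0 with
   u^(k)(0) = 0 for k <= N-1 and u^(N)(0) = 1. *)
Definition is_fundamental (ls : list R) (u : R -> R) : Prop :=
  (forall (n : nat) (t : R), ex_derive_n u n t) /\
  (forall t : R, Lop ls u t = 0) /\
  (forall k : nat, (k < pred (length ls))%nat -> Derive_n u k 0 = 0) /\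
  Derive_n u (pred (length ls)) 0 = 1.

Definition Cab (a b : R) : R :=
  Rmax (Rmax (1/2) ((2 - a - b) / (2 * (2 - a))))
       (Rmax ((2 * a ^ 2 + (2 * a - 1) * b + 2 - 3 * a) / (2 * (1 - 2 * a) * (2 - a)))
             ((1 - b) / (2 * (1 - 2 * a)))).

(* Main.v *)
Require Import Defs.
From Stdlib Require Import Reals Lra Psatz List FunctionalExtensionality.
From Coquelicot Require Import Coquelicot.
Import ListNotations.
Open Scope R_scope.


Lemma dplus (f g : R -> R) (x df dg : R) : is_derive f x df -> is_derive g x dg ->
  is_derive (fun t => f t + g t) x (df + dg).
Proof. intros H1 H2. exact (is_derive_plus f g x df dg H1 H2). Qed.
Lemma dminus (f g : R -> R) (x df dg : R) : is_derive f x df -> is_derive g x dg ->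
  is_derive (fun t => f t - g t) x (df - dg).
Proof. intros H1 H2. exact (is_derive_minus f g x df dg H1 H2). Qed.
Lemma dmult (f g : R -> R) (x df dg : R) : is_derive f x df -> is_derive g x dg ->
  is_derive (fun t => f t * g t) x (df * g x + f x * dg).
Proof. intros H1 H2. exact (is_derive_mult f g x df dg H1 H2 Rmult_comm). Qed.
Lemma dscal (f : R -> R) (x k df : R) : is_derive f x df ->
  is_derive (fun t => k * f t) x (k * df).
Proof. intros H1. exact (is_derive_scal f x k df H1). Qed.
Lemma dopp (f : R -> R) (x df : R) : is_derive f x df ->
  is_derive (fun t => - f t) x (- df).
Proof. intros H1. exact (is_derive_opp f x df H1). Qed.
Lemma dext (f g : R -> R) (x l l' : R) : (forall t, f t = g t) -> l = l' -> is_derive f x l -> is_derive g x l'.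
Proof. intros H1 H2 H3. subst. exact (is_derive_ext f g x l' H1 H3). Qed.

Lemma did (x : R) : is_derive (fun t => t) x 1.
Proof. auto_derive; auto. Qed.

Lemma incr_le (f df : R -> R) (a b : R) :
  a <= b -> (forall x, a <= x <= b -> is_derive f x (df x)) ->
  (forall x, a < x < b -> 0 <= df x) -> f a <= f b.
Proof.
  intros Hab Hd Hp. destruct (Rle_lt_or_eq_dec a b Hab) as [Hlt|Heq].
  - destruct (MVT_cor2 f df a b Hlt) as [c [Hc1 Hc2]].
    + intros c Hc. apply is_derive_Reals. apply Hd. lra.
    + specialize (Hp c Hc2). nra.
  - subst. lra.
Qed.

Lemma incr_lt (f df : R -> R) (a b : R) :
  a < b -> (forall x, a <= x <= b -> is_derive f x (df x)) ->
  (forall x, a < x < b -> 0 < df x) -> f a < f b.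
Proof.
  intros Hlt Hd Hp.
  destruct (MVT_cor2 f df a b Hlt) as [c [Hc1 Hc2]].
  + intros c Hc. apply is_derive_Reals. apply Hd. lra.
  + specialize (Hp c Hc2). nra.
Qed.

Lemma pos_from_deriv (f df : R -> R) (x : R) :
  0 <= x -> (forall y, 0 <= y <= x -> is_derive f y (df y)) ->
  (forall y, 0 < y < x -> 0 <= df y) -> 0 <= f 0 -> 0 <= f x.
Proof. intros Hx Hd Hp H0. pose proof (incr_le f df 0 x Hx Hd Hp). lra. Qed.

Lemma spos_from_deriv (f df : R -> R) (x : R) :
  0 < x -> (forall y, 0 <= y <= x -> is_derive f y (df y)) ->
  (forall y, 0 < y < x -> 0 < df y) -> 0 <= f 0 -> 0 < f x.
Proof. intros Hx Hd Hp H0. pose proof (incr_lt f df 0 x Hx Hd Hp). lra. Qed.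

Lemma const_from_deriv0 (h : R -> R) :
  (forall t, is_derive h t 0) -> forall t, h t = h 0.
Proof.
  intros Hd t.
  assert (Hn : forall t, is_derive (fun t => - h t) t 0).
  { intros y. replace 0 with (- 0) by ring. apply dopp. apply Hd. }
  destruct (Rle_or_lt 0 t) as [H|H].
  - assert (h 0 <= h t).
    { apply (incr_le h (fun _ => 0)); [exact H| intros; apply Hd | intros; lra]. }
    assert (- h 0 <= - h t).
    { apply (incr_le (fun t => - h t) (fun _ => 0)); [exact H| intros; apply Hn | intros; lra]. }
    lra.
  - assert (h t <= h 0).
    { apply (incr_le h (fun _ => 0)); [lra| intros; apply Hd | intros; lra]. }
    assert (- h t <= - h 0).
    { apply (incr_le (fun t => - h t) (fun _ => 0)); [lra| intros; apply Hn | intros; lra]. }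
    lra.
Qed.

Lemma uniq1 (f fc g : R -> R) (l : R) :
  (forall t, is_derive f t (l * f t + g t)) ->
  (forall t, is_derive fc t (l * fc t + g t)) ->
  f 0 = fc 0 -> forall t, f t = fc t.
Proof.
  intros Hf Hfc H0 t.
  set (h := fun t => (f t - fc t) * exp (- l * t)).
  assert (Hd : forall t, is_derive h t 0).
  { intros s. unfold h.
    apply (is_derive_ext (fun t => (f t - fc t) * exp (- l * t))); [reflexivity|].
    replace 0 with ((l * f s + g s - (l * fc s + g s)) * exp (- l * s) + (f s - fc s) * (- l * exp (- l * s))) by ring.
    apply (dmult (fun t => f t - fc t) (fun t => exp (- l * t))).
    - apply (dminus f fc); auto.
    - auto_derive; auto. ring. }
  pose proof (const_from_deriv0 h Hd t) as Ht. unfold h in Ht.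
  rewrite H0 in Ht. replace (fc 0 - fc 0) with 0 in Ht by ring.
  rewrite Rmult_0_l in Ht.
  assert (exp (- l * t) > 0) by apply exp_pos.
  apply Rmult_integral in Ht. destruct Ht; [lra|lra].
Qed.

Lemma exp_mul_opp x : exp x * exp (- x) = 1.
Proof. rewrite <- exp_plus. replace (x + - x) with 0 by ring. apply exp_0. Qed.

Lemma ch2 x : cosh x * cosh x - sinh x * sinh x = 1.
Proof. unfold cosh, sinh. pose proof (exp_mul_opp x). nra. Qed.

Lemma ch_m_sh x : cosh x - sinh x = exp (- x).
Proof. unfold cosh, sinh. field. Qed.
Lemma ch_p_sh x : cosh x + sinh x = exp x.
Proof. unfold cosh, sinh. field. Qed.

Lemma ch_gt_sh x : sinh x < cosh x.
Proof. pose proof (ch_m_sh x). pose proof (exp_pos (- x)). lra. Qed.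

Lemma ch_pos x : 0 < cosh x.
Proof. unfold cosh. pose proof (exp_pos x). pose proof (exp_pos (-x)). lra. Qed.

Lemma ch_ge1 x : 1 <= cosh x.
Proof. pose proof (ch2 x). pose proof (ch_pos x). nra. Qed.

Lemma sh_odd x : sinh (- x) = - sinh x.
Proof. unfold sinh. rewrite Ropp_involutive. field. Qed.
Lemma ch_even x : cosh (- x) = cosh x.
Proof. unfold cosh. rewrite Ropp_involutive. field. Qed.

Lemma d_sh x : is_derive sinh x (cosh x).
Proof. unfold sinh, cosh. auto_derive; auto. field. Qed.
Lemma d_ch x : is_derive cosh x (sinh x).
Proof. unfold sinh, cosh. auto_derive; auto. field. Qed.
Lemma d_shk k x : is_derive (fun t => sinh (k * t)) x (k * cosh (k * x)).
Proof. unfold sinh, cosh. auto_derive; auto. field. Qed.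
Lemma d_chk k x : is_derive (fun t => cosh (k * t)) x (k * sinh (k * x)).
Proof. unfold sinh, cosh. auto_derive; auto. field. Qed.

Lemma sh_ge0 x : 0 <= x -> 0 <= sinh x.
Proof.
  intro Hx. replace 0 with (sinh 0) at 1 by (unfold sinh; rewrite Ropp_0; field).
  apply (incr_le sinh cosh 0 x Hx); [intros; apply d_sh | intros; left; apply ch_pos].
Qed.
Lemma sh_gt0 x : 0 < x -> 0 < sinh x.
Proof.
  intro Hx. replace 0 with (sinh 0) at 1 by (unfold sinh; rewrite Ropp_0; field).
  apply (incr_lt sinh cosh 0 x Hx); [intros; apply d_sh | intros; apply ch_pos].
Qed.
Lemma sh_mono a b : a <= b -> sinh a <= sinh b.
Proof. intro H. apply (incr_le sinh cosh a b H); [intros; apply d_sh | intros; left; apply ch_pos]. Qed.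
Lemma sh_smono a b : a < b -> sinh a < sinh b.
Proof. intro H. apply (incr_lt sinh cosh a b H); [intros; apply d_sh | intros; apply ch_pos]. Qed.

Lemma ch_mono a b : 0 <= a <= b -> cosh a <= cosh b.
Proof.
  intro H. apply (incr_le cosh sinh a b); [lra | intros; apply d_ch | intros; apply sh_ge0; lra].
Qed.
Lemma ch_smono a b : 0 <= a < b -> cosh a < cosh b.
Proof.
  intro H. apply (incr_lt cosh sinh a b); [lra | intros; apply d_ch | intros; apply sh_gt0; lra].
Qed.

Lemma sh2x x : sinh (2 * x) = 2 * sinh x * cosh x.
Proof. unfold sinh, cosh. replace (- (2*x)) with (- x + - x) by ring.
  replace (2 * x) with (x + x) by ring. rewrite !exp_plus. field. Qed.
Lemma ch2x x : cosh (2 * x) = 1 + 2 * sinh x * sinh x.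
Proof. unfold sinh, cosh. replace (- (2*x)) with (- x + - x) by ring.
  replace (2 * x) with (x + x) by ring. rewrite !exp_plus. pose proof (exp_mul_opp x). nra. Qed.

Lemma sh_ge_1 x : 0 <= x -> x <= sinh x.
Proof.
  intro Hx. apply Rminus_le_0.
  apply (pos_from_deriv (fun x => sinh x - x) (fun x => cosh x - 1)); auto.
  - intros y _. apply dminus; [apply d_sh| apply (did y)].
  - intros y _. pose proof (ch_ge1 y). lra.
  - rewrite sinh_0. lra.
Qed.
Lemma ch_ge_2p x : 0 <= x -> 1 + x^2/2 <= cosh x.
Proof.
  intro Hx. apply Rminus_le_0.
  apply (pos_from_deriv (fun x => cosh x - (1 + x^2/2)) (fun x => sinh x - x)); auto.
  - intros y _. apply dminus; [apply d_ch|]. auto_derive; auto. field.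
  - intros y Hy. pose proof (sh_ge_1 y). lra.
  - rewrite cosh_0. lra.
Qed.
Lemma ch_ge_2 x : 1 + x^2/2 <= cosh x.
Proof.
  destruct (Rle_or_lt 0 x). apply ch_ge_2p; auto.
  rewrite <- ch_even. replace (x^2) with ((-x)^2) by ring. apply ch_ge_2p. lra.
Qed.
Lemma sh_ge_3 x : 0 <= x -> x + x^3/6 <= sinh x.
Proof.
  intro Hx. apply Rminus_le_0.
  apply (pos_from_deriv (fun x => sinh x - (x + x^3/6)) (fun x => cosh x - (1 + x^2/2))); auto.
  - intros y _. apply dminus; [apply d_sh|]. auto_derive; auto. field.
  - intros y Hy. pose proof (ch_ge_2 y). lra.
  - rewrite sinh_0. lra.
Qed.
Lemma ch_ge_4 x : 0 <= x -> 1 + x^2/2 + x^4/24 <= cosh x.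
Proof.
  intro Hx. apply Rminus_le_0.
  apply (pos_from_deriv (fun x => cosh x - (1 + x^2/2 + x^4/24)) (fun x => sinh x - (x + x^3/6))); auto.
  - intros y _. apply dminus; [apply d_ch|]. auto_derive; auto. field.
  - intros y Hy. pose proof (sh_ge_3 y). lra.
  - rewrite cosh_0. lra.
Qed.
Lemma sh_ge_5 x : 0 <= x -> x + x^3/6 + x^5/120 <= sinh x.
Proof.
  intro Hx. apply Rminus_le_0.
  apply (pos_from_deriv (fun x => sinh x - (x + x^3/6 + x^5/120)) (fun x => cosh x - (1 + x^2/2 + x^4/24))); auto.
  - intros y _. apply dminus; [apply d_sh|]. auto_derive; auto. field.
  - intros y Hy. assert (0 <= y) by lra. pose proof (ch_ge_4 y H). lra.
  - rewrite sinh_0. lra.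
Qed.

Lemma tanh_le x : 0 <= x -> sinh x <= x * cosh x.
Proof.
  intro Hx. apply Rminus_le_0.
  apply (pos_from_deriv (fun x => x * cosh x - sinh x) (fun x => x * sinh x)); auto.
  - intros y _. apply (dext (fun x => x * cosh x - sinh x) (fun x => x * cosh x - sinh x) y (1 * cosh y + y * sinh y - cosh y) (y * sinh y)); [intros; reflexivity | ring | ].
    apply dminus; [apply dmult; [apply did| apply d_ch]| apply d_sh].
  - intros y Hy. pose proof (sh_ge0 y). nra.
  - rewrite sinh_0. lra.
Qed.
Lemma U2 x : 0 <= x -> cosh x <= 1 + x^2 * cosh x / 2.
Proof.
  intro Hx. apply Rminus_le_0.
  apply (pos_from_deriv (fun x => 1 + x^2 * cosh x / 2 - cosh x) (fun x => x * cosh x + x^2 * sinh x/2 - sinh x)); auto.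
  - intros y _. unfold cosh, sinh. auto_derive; auto. field.
  - intros y Hy. pose proof (tanh_le y). pose proof (sh_ge0 y). nra.
  - rewrite cosh_0. lra.
Qed.
Lemma U3 x : 0 <= x -> sinh x <= x + x^3 * cosh x / 6.
Proof.
  intro Hx. apply Rminus_le_0.
  apply (pos_from_deriv (fun x => x + x^3 * cosh x / 6 - sinh x) (fun x => 1 + (3*x^2*cosh x + x^3*sinh x)/6 - cosh x)); auto.
  - intros y _. unfold cosh, sinh. auto_derive; auto. field.
  - intros y Hy. pose proof (U2 y). pose proof (sh_ge0 y). assert (0 <= y^3 * sinh y) by (apply Rmult_le_pos; [apply pow_le|]; lra). nra.
  - rewrite sinh_0. lra.
Qed.
Lemma U4 x : 0 <= x -> cosh x <= 1 + x^2/2 + x^4 * cosh x / 24.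
Proof.
  intro Hx. apply Rminus_le_0.
  apply (pos_from_deriv (fun x => 1 + x^2/2 + x^4 * cosh x / 24 - cosh x) (fun x => x + (4*x^3*cosh x + x^4*sinh x)/24 - sinh x)); auto.
  - intros y _. unfold cosh, sinh. auto_derive; auto. field.
  - intros y Hy. pose proof (U3 y). pose proof (sh_ge0 y). assert (0 <= y^4 * sinh y) by (apply Rmult_le_pos; [apply pow_le|]; lra). nra.
  - rewrite cosh_0. lra.
Qed.
Lemma U5 x : 0 <= x -> sinh x <= x + x^3/6 + x^5 * cosh x / 120.
Proof.
  intro Hx. apply Rminus_le_0.
  apply (pos_from_deriv (fun x => x + x^3/6 + x^5 * cosh x / 120 - sinh x) (fun x => 1 + x^2/2 + (5*x^4*cosh x + x^5*sinh x)/120 - cosh x)); auto.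
  - intros y _. unfold cosh, sinh. auto_derive; auto. field.
  - intros y Hy. pose proof (U4 y). pose proof (sh_ge0 y). assert (0 <= y^5 * sinh y) by (apply Rmult_le_pos; [apply pow_le|]; lra). nra.
  - rewrite sinh_0. lra.
Qed.
Lemma U6 x : 0 <= x -> cosh x <= 1 + x^2/2 + x^4/24 + x^6 * cosh x / 720.
Proof.
  intro Hx. apply Rminus_le_0.
  apply (pos_from_deriv (fun x => 1 + x^2/2 + x^4/24 + x^6 * cosh x / 720 - cosh x) (fun x => x + x^3/6 + (6*x^5*cosh x + x^6*sinh x)/720 - sinh x)); auto.
  - intros y _. unfold cosh, sinh. auto_derive; auto. field.
  - intros y Hy. pose proof (U5 y). pose proof (sh_ge0 y). assert (0 <= y^6 * sinh y) by (apply Rmult_le_pos; [apply pow_le|]; lra). nra.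
  - rewrite cosh_0. lra.
Qed.
Lemma V7 x : 0 <= x -> x * cosh x - sinh x <= x^3/3 + x^5/30 + x^7 * cosh x / 840.
Proof.
  intro Hx. apply Rminus_le_0.
  apply (pos_from_deriv (fun x => x^3/3 + x^5/30 + x^7 * cosh x / 840 - (x * cosh x - sinh x))
     (fun x => x^2 + x^4/6 + (7*x^6*cosh x + x^7*sinh x)/840 - x * sinh x)); auto.
  - intros y _. unfold cosh, sinh. auto_derive; auto. field.
  - intros y Hy. pose proof (U5 y). pose proof (sh_ge0 y). assert (0 <= y^7 * sinh y) by (apply Rmult_le_pos; [apply pow_le|]; lra). nra.
  - rewrite sinh_0, cosh_0. lra.
Qed.

Lemma P_ineq r u : 0 <= r <= 1 -> 0 <= u ->
  (3 - r) * sinh (r*u) <= 3*r*(1-r)*u + 2*r^2 * sinh u.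
Proof.
  intros Hr Hu.
  assert (Hh : forall u, 0 <= u -> 0 <= 2 * sinh u - (3 - r) * sinh (r*u)).
  { intros v Hv.
    apply (pos_from_deriv (fun u => 2 * sinh u - (3 - r) * sinh (r*u))
             (fun u => 2 * cosh u - (3 - r) * (r * cosh (r*u)))); auto.
    - intros y _. apply dminus; apply dscal; [apply d_sh | apply d_shk].
    - intros y Hy. cbv beta. assert (cosh (r*y) <= cosh y) by (apply ch_mono; nra).
      pose proof (ch_pos (r*y)). assert (0 <= (1-r)*(2-r)) by nra. nra.
    - cbv beta. rewrite !Rmult_0_r, sinh_0. lra. }
  assert (Hg : forall u, 0 <= u -> 0 <= 3*(1-r) + 2*r*cosh u - (3-r)*cosh (r*u)).
  { intros v Hv.
    apply (pos_from_deriv (fun u => 3*(1-r) + 2*r*cosh u - (3-r)*cosh (r*u))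
             (fun u => r * (2 * sinh u - (3 - r) * sinh (r*u)))); auto.
    - intros y _. apply (dext (fun u => 3*(1-r) + 2*r*cosh u - (3-r)*cosh (r*u))
        (fun u => 3*(1-r) + 2*r*cosh u - (3-r)*cosh (r*u)) y
        (0 + 2*r*sinh y - (3-r)*(r*sinh (r*y))) _); [intros; reflexivity | ring |].
      apply dminus; [apply dplus; [apply (is_derive_const (3*(1-r)) y)| apply dscal; apply d_ch]|apply dscal; apply d_chk].
    - intros y Hy. cbv beta. specialize (Hh y ltac:(lra)). nra.
    - cbv beta. rewrite !Rmult_0_r, cosh_0. lra. }
  apply Rminus_le_0.
  apply (pos_from_deriv (fun u => 3*r*(1-r)*u + 2*r^2 * sinh u - (3 - r) * sinh (r*u))
          (fun u => r * (3*(1-r) + 2*r*cosh u - (3-r)*cosh (r*u)))); auto.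
  - intros y _. apply (dext (fun u => 3*r*(1-r)*u + 2*r^2 * sinh u - (3 - r) * sinh (r*u))
        (fun u => 3*r*(1-r)*u + 2*r^2 * sinh u - (3 - r) * sinh (r*u)) y
        (3*r*(1-r)*1 + 2*r^2*cosh y - (3-r)*(r*cosh (r*y))) _); [intros; reflexivity | ring |].
    apply dminus; [apply dplus; apply dscal; [apply did | apply d_sh]| apply dscal; apply d_shk].
  - intros y Hy. cbv beta. specialize (Hg y ltac:(lra)). nra.
  - cbv beta. rewrite !Rmult_0_r, sinh_0. lra.
Qed.

Lemma Lh r X : 0 <= r <= 1 -> 0 <= X -> sinh (r*X) <= r * sinh X.
Proof.
  intros Hr HX. apply Rminus_le_0.
  apply (pos_from_deriv (fun X => r * sinh X - sinh (r*X)) (fun X => r * cosh X - r * cosh (r*X))); auto.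
  - intros y _. apply dminus; [apply dscal; apply d_sh | apply d_shk].
  - intros y Hy. cbv beta. assert (cosh (r*y) <= cosh y) by (apply ch_mono; nra). nra.
  - cbv beta. rewrite !Rmult_0_r, sinh_0. lra.
Qed.

Lemma Lh_strict r X : 0 < r < 1 -> 0 < X -> sinh (r*X) < r * sinh X.
Proof.
  intros Hr HX. apply Rminus_gt_0_lt.
  apply (spos_from_deriv (fun X => r * sinh X - sinh (r*X)) (fun X => r * cosh X - r * cosh (r*X))); auto.
  - intros y _. apply dminus; [apply dscal; apply d_sh | apply d_shk].
  - intros y Hy. cbv beta. assert (cosh (r*y) < cosh y) by (apply ch_smono; nra). nra.
  - cbv beta. rewrite !Rmult_0_r, sinh_0. lra.
Qed.

Lemma L3 r X : 0 <= r <= 1 -> 0 <= X -> sinh (r*X) <= r*X + r^3 * (sinh X - X).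
Proof.
  intros Hr HX.
  assert (Hg : forall X, 0 <= X -> 0 <= 1 + r^2 * (cosh X - 1) - cosh (r*X)).
  { intros v Hv.
    apply (pos_from_deriv (fun X => 1 + r^2 * (cosh X - 1) - cosh (r*X))
             (fun X => r * (r * sinh X - sinh (r*X)))); auto.
    - intros y _. apply (dext (fun X => 1 + r^2 * (cosh X - 1) - cosh (r*X))
        (fun X => 1 + r^2 * (cosh X - 1) - cosh (r*X)) y
        (0 + r^2 * (sinh y - 0) - r * sinh (r*y)) _); [intros; reflexivity | ring |].
      apply dminus; [apply dplus; [apply (is_derive_const 1 y)| apply dscal; apply dminus; [apply d_ch| apply (is_derive_const 1 y)]]| apply d_chk].
    - intros y Hy. cbv beta. pose proof (Lh r y Hr ltac:(lra)). nra.
    - cbv beta. rewrite !Rmult_0_r, cosh_0. lra. }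
  apply Rminus_le_0.
  apply (pos_from_deriv (fun X => r*X + r^3 * (sinh X - X) - sinh (r*X))
          (fun X => r * (1 + r^2 * (cosh X - 1) - cosh (r*X)))); auto.
  - intros y _. apply (dext (fun X => r*X + r^3 * (sinh X - X) - sinh (r*X))
        (fun X => r*X + r^3 * (sinh X - X) - sinh (r*X)) y
        (r * 1 + r^3 * (cosh y - 1) - r * cosh (r*y)) _); [intros; reflexivity | ring |].
    apply dminus; [apply dplus; [apply dscal; apply did| apply dscal; apply dminus; [apply d_sh| apply did]]| apply d_shk].
  - intros y Hy. cbv beta. specialize (Hg y ltac:(lra)). nra.
  - cbv beta. rewrite !Rmult_0_r, sinh_0. lra.
Qed.

Definition Nf (r X : R) := cosh X * sinh (r * X) / r - sinh X * cosh (r * X).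
Definition A0 (X : R) := X * cosh X - sinh X.
Definition A1 (X : R) := (sinh X * cosh X - X) / 2.

Lemma d_Nf r X : r <> 0 -> is_derive (Nf r) X ((1 - r^2) * sinh X * sinh (r*X) / r).
Proof.
  intro Hr. unfold Nf, sinh, cosh. auto_derive; auto. field. auto.
Qed.
Lemma d_A0 X : is_derive A0 X (X * sinh X).
Proof. unfold A0, sinh, cosh. auto_derive; auto. field. Qed.
Lemma d_A1 X : is_derive A1 X (sinh X * sinh X).
Proof.
  unfold A1. apply (dext (fun X => (sinh X * cosh X - X) / 2) _ X
     ((cosh X * cosh X + sinh X * sinh X - 1)/2) _); [intros; reflexivity| pose proof (ch2 X); lra|].
  unfold sinh, cosh. auto_derive; auto. field.
Qed.

Lemma Nf_ge0 r X : 0 < r <= 1 -> 0 <= X -> 0 <= Nf r X.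
Proof.
  intros Hr HX.
  apply (pos_from_deriv (Nf r) (fun X => (1 - r^2) * sinh X * sinh (r*X) / r)); auto.
  - intros y _. apply d_Nf. lra.
  - intros y Hy. pose proof (sh_ge0 y). pose proof (sh_ge0 (r*y)).
    assert (0 <= (1 - r^2)) by nra. apply Rmult_le_pos; [|left; apply Rinv_0_lt_compat; lra].
    apply Rmult_le_pos; [apply Rmult_le_pos|]; nra.
  - unfold Nf. rewrite !Rmult_0_r, sinh_0. lra.
Qed.

Lemma Omega1 r X : 0 < r <= 1 -> 0 <= X ->
  (3 - r) * Nf r X <= (1 - r^2) * (3*(1-r)*A0 X + 2*r*A1 X).
Proof.
  intros Hr HX. apply Rminus_le_0.
  apply (pos_from_deriv (fun X => (1 - r^2) * (3*(1-r)*A0 X + 2*r*A1 X) - (3 - r) * Nf r X)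
    (fun X => (1 - r^2) * (3*(1-r)*(X * sinh X) + 2*r*(sinh X * sinh X)) - (3 - r) * ((1 - r^2) * sinh X * sinh (r*X) / r))); auto.
  - intros y _. apply dminus; apply dscal; [apply dplus; apply dscal; [apply d_A0| apply d_A1]| apply d_Nf; lra].
  - intros y Hy. cbv beta. pose proof (P_ineq r y ltac:(lra) ltac:(lra)).
    pose proof (sh_ge0 y ltac:(lra)).
    assert (E : (1 - r^2) * (3*(1-r)*(y * sinh y) + 2*r*(sinh y * sinh y)) - (3 - r) * ((1 - r^2) * sinh y * sinh (r*y) / r)
       = (1 - r^2) * sinh y / r * (3*r*(1-r)*y + 2*r^2 * sinh y - (3 - r) * sinh (r*y))) by (field; lra).
    rewrite E. apply Rmult_le_pos; [|lra].
    apply Rmult_le_pos; [apply Rmult_le_pos; nra| left; apply Rinv_0_lt_compat; lra].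
  - cbv beta. unfold Nf, A0, A1. rewrite !Rmult_0_r, sinh_0, cosh_0. lra.
Qed.

Lemma Omega2 r X : 0 < r <= 1 -> 0 <= X ->
  Nf r X <= (1 - r^2) * (A0 X + r^2 * (A1 X - A0 X)).
Proof.
  intros Hr HX. apply Rminus_le_0.
  apply (pos_from_deriv (fun X => (1 - r^2) * (A0 X + r^2 * (A1 X - A0 X)) - Nf r X)
    (fun X => (1 - r^2) * ((X * sinh X) + r^2 * (sinh X * sinh X - X * sinh X)) - ((1 - r^2) * sinh X * sinh (r*X) / r))); auto.
  - intros y _. apply dminus; [apply dscal; apply dplus; [apply d_A0| apply dscal; apply dminus; [apply d_A1| apply d_A0]]| apply d_Nf; lra].
  - intros y Hy. cbv beta. pose proof (L3 r y ltac:(lra) ltac:(lra)).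
    pose proof (sh_ge0 y ltac:(lra)).
    assert (E : (1 - r^2) * ((y * sinh y) + r^2 * (sinh y * sinh y - y * sinh y)) - ((1 - r^2) * sinh y * sinh (r*y) / r)
       = (1 - r^2) * sinh y / r * (r*y + r^3 * (sinh y - y) - sinh (r*y))) by (field; lra).
    rewrite E. apply Rmult_le_pos; [|lra].
    apply Rmult_le_pos; [apply Rmult_le_pos; nra| left; apply Rinv_0_lt_compat; lra].
  - cbv beta. unfold Nf, A0, A1. rewrite !Rmult_0_r, sinh_0, cosh_0. lra.
Qed.

Lemma E0 x : 0 < x -> 3 * A0 x < sinh x * sinh x.
Proof.
  intro Hx. apply Rminus_gt_0_lt.
  apply (spos_from_deriv (fun x => sinh x * sinh x - 3 * A0 x)
     (fun x => sinh x * (2 * cosh x - 3 * x))); auto.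
  - intros y _. apply (dext (fun x => sinh x * sinh x - 3 * A0 x) _ y
       (cosh y * sinh y + sinh y * cosh y - 3 * (y * sinh y)) _); [intros; reflexivity| ring|].
    apply dminus; [apply dmult; apply d_sh| apply dscal; apply d_A0].
  - intros y Hy. cbv beta. pose proof (sh_gt0 y ltac:(lra)). pose proof (ch_ge_4 y ltac:(lra)).
    pose proof (pow2_ge_0 (y^2 - 7/5)). pose proof (pow2_ge_0 (y - 45/37)).
    assert (0 < 2 * cosh y - 3 * y) by nra. nra.
  - cbv beta. unfold A0. rewrite sinh_0, cosh_0. lra.
Qed.

Lemma E1 x : 0 <= x -> 2 * A1 x <= sinh x * sinh x.
Proof.
  intro Hx. apply Rminus_le_0.
  apply (pos_from_deriv (fun x => sinh x * sinh x - 2 * A1 x)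
     (fun x => 2 * sinh x * (cosh x - sinh x))); auto.
  - intros y _. apply (dext (fun x => sinh x * sinh x - 2 * A1 x) _ y
       (cosh y * sinh y + sinh y * cosh y - 2 * (sinh y * sinh y)) _); [intros; reflexivity| ring|].
    apply dminus; [apply dmult; apply d_sh| apply dscal; apply d_A1].
  - intros y Hy. cbv beta. pose proof (sh_ge0 y ltac:(lra)). pose proof (ch_gt_sh y). nra.
  - cbv beta. unfold A1. rewrite sinh_0, cosh_0. lra.
Qed.

Lemma EB x : 0 <= x -> A0 x <= A1 x.
Proof.
  intro Hx. apply Rminus_le_0.
  apply (pos_from_deriv (fun x => A1 x - A0 x) (fun x => sinh x * (sinh x - x))); auto.
  - intros y _. apply (dext (fun x => A1 x - A0 x) _ y (sinh y * sinh y - y * sinh y) _); [intros; reflexivity| ring|].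
    apply dminus; [apply d_A1| apply d_A0].
  - intros y Hy. cbv beta. pose proof (sh_ge0 y ltac:(lra)). pose proof (sh_ge_1 y ltac:(lra)). nra.
  - cbv beta. unfold A0, A1. rewrite sinh_0, cosh_0. lra.
Qed.

Lemma E2 x : 0 < x -> 0 < 3 * sinh x * sinh x - 2 * sinh x * x - 2 * sinh x * cosh x + 2 * x.
Proof.
  intro Hx. pose proof (ch2 x) as Hc.
  assert (Hid : 3 * sinh x * sinh x - 2 * sinh x * x - 2 * sinh x * cosh x + 2 * x
       = (sinh x - x)^2 - (x - 1)^2 + (cosh x - sinh x)^2).
  { replace (3 * sinh x * sinh x - 2 * sinh x * x - 2 * sinh x * cosh x + 2 * x) with
      ((sinh x - x)^2 - (x - 1)^2 + (cosh x - sinh x)^2 + (1 - (cosh x * cosh x - sinh x * sinh x))) by ring.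
    rewrite Hc. ring. }
  rewrite Hid. rewrite ch_m_sh.
  destruct (Rle_or_lt 1 x) as [H1|H1].
  - pose proof (sh_ge_5 x ltac:(lra)).
    assert (0 <= x * (x - 3/2)^2) by (apply Rmult_le_pos; [lra| apply pow2_ge_0]).
    pose proof (pow2_ge_0 (x - 11/8)). assert (0 <= x^5) by (apply pow_le; lra).
    assert (2*x - 1 <= sinh x) by nra.
    pose proof (exp_pos (-x)). nra.
  - assert (1 - x < exp (- x)).
    { pose proof (exp_ineq1 (- x)). assert (- x <> 0) by lra. specialize (H H0). lra. }
    assert (0 < (exp(-x) - (1-x)) * (exp(-x) + (1 - x))) by (apply Rmult_lt_0_compat; lra).
    pose proof (pow2_ge_0 (sinh x - x)). nra.
Qed.

Lemma E3 x : 0 < x -> 0 < 3 * sinh x * sinh x - sinh x * x - 7 * A0 x.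
Proof.
  intro Hx. pose proof (E0 x Hx). pose proof (sh_gt0 x Hx).
  destruct (Rle_or_lt (3/2 * x) (sinh x)) as [H1|H1].
  - nra.
  - assert (Hx2 : x < 163/100).
    { destruct (Rlt_or_le x (163/100)); auto. pose proof (sh_ge_5 x ltac:(lra)).
      assert (Hq2 : x^2 >= 163/100 * (163/100)) by nra.
      assert (Hq4 : x^4 >= (163/100 * (163/100))^2) by nra.
      assert (x^2/6 + x^4/120 - 1/2 >= 0) by nra.
      assert (x^3/6 + x^5/120 - x/2 = x * (x^2/6 + x^4/120 - 1/2)) by field.
      assert (x * (x^2/6 + x^4/120 - 1/2) >= 0) by nra. lra. }
    pose proof (U6 x ltac:(lra)) as HU6. pose proof (U5 x ltac:(lra)) as HU5.
    pose proof (V7 x ltac:(lra)) as HV7. pose proof (sh_ge_5 x ltac:(lra)) as HL.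
    pose proof (ch_ge1 x).
    assert (HC : cosh x <= 27/10).
    { assert (x^2 <= 26569/10000) by nra. assert (x^4 <= (26569/10000)^2) by nra.
      assert (x^6 <= (26569/10000)^3) by nra. nra. }
    assert (Hs : sinh x <= x + x^3/6 + x^5 * (27/10)/120).
    { assert (0 <= x^5) by (apply pow_le; lra). nra. }
    assert (HA : A0 x <= x^3/3 + x^5/30 + x^7 * (27/10)/840).
    { unfold A0. assert (0 <= x^7) by (apply pow_le; lra). nra. }
    set (Ls := x + x^3/6 + x^5/120) in *.
    assert (0 <= Ls) by (unfold Ls; assert (0 <= x^3) by (apply pow_le; lra); assert (0 <= x^5) by (apply pow_le; lra); lra).
    assert (0 <= (sinh x - Ls) * (sinh x + Ls)) by (apply Rmult_le_pos; lra).
    assert (sinh x * sinh x >= Ls * Ls) by nra.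
    assert (Hp : 0 < 3 * Ls * Ls - x * (x + x^3/6 + x^5 * (27/10)/120) - 7 * (x^3/3 + x^5/30 + x^7 * (27/10)/840)).
    { assert (0 < 3 * (1 + x^2/6 + x^4/120)^2 - (1 + x^2/6 + 27/10 * x^4/120) - 7 * (x/3 + x^3/30 + 27/10 * x^5/840)).
      { assert (Hq : 3 * (1 + x^2/6 + x^4/120)^2 - (1 + x^2/6 + 27/10 * x^4/120) - 7 * (x/3 + x^3/30 + 27/10 * x^5/840)
           = 19/200 * (x^2 - 70/57 * x)^2 + (2 - 7/3 * x + (5/6 - 19/200 * (70/57)^2) * x^2)
             + x^4 * (1/120 * (x - 27/20)^2 + (19/1200 - 1/120 * (27/20)^2)) + x^8/4800) by field.
        rewrite Hq.
        assert (0 < 2 - 7/3 * x + (5/6 - 19/200 * (70/57)^2) * x^2).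
        { pose proof (pow2_ge_0 (x - 169/100)). nra. }
        assert (0 <= x^4 * (1/120 * (x - 27/20)^2 + (19/1200 - 1/120 * (27/20)^2))).
        { apply Rmult_le_pos; [apply pow_le; lra|]. pose proof (pow2_ge_0 (x - 27/20)). lra. }
        pose proof (pow2_ge_0 (x^2 - 70/57 * x)). assert (0 <= x^8) by (apply pow_le; lra). lra. }
      assert (E : 3 * Ls * Ls - x * (x + x^3/6 + x^5 * (27/10)/120) - 7 * (x^3/3 + x^5/30 + x^7 * (27/10)/840)
        = x^2 * (3 * (1 + x^2/6 + x^4/120)^2 - (1 + x^2/6 + 27/10 * x^4/120) - 7 * (x/3 + x^3/30 + 27/10 * x^5/840))) by (unfold Ls; field).
      rewrite E. apply Rmult_lt_0_compat; [nra| lra]. }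
    nra.
Qed.

Lemma E0le x : 0 <= x -> 3 * A0 x <= sinh x * sinh x.
Proof.
  intro Hx. destruct (Rle_lt_or_eq_dec 0 x Hx) as [H|H].
  - left. apply E0; auto.
  - subst. unfold A0. rewrite sinh_0, cosh_0. lra.
Qed.

Lemma I1 r x : 0 < r <= 1 -> 0 <= x -> (3 - r) * Nf r x <= (1 - r^2) * (sinh x * sinh x).
Proof.
  intros Hr Hx. pose proof (Omega1 r x Hr Hx). pose proof (E0le x Hx). pose proof (E1 x Hx).
  assert (0 <= 1 - r^2) by nra.
  assert ((1 - r^2) * (3*(1-r)*A0 x + 2*r*A1 x) <= (1 - r^2) * (sinh x * sinh x)).
  { apply Rmult_le_compat_l; auto. nra. }
  lra.
Qed.

Lemma I2 r x : 0 < r < 1 -> 0 < x -> (3 + r) * Nf r x < (1 + r) * sinh x * (sinh x - sinh (r*x)).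
Proof.
  intros Hr Hx.
  pose proof (Omega2 r x ltac:(lra) ltac:(lra)) as HN.
  pose proof (L3 r x ltac:(lra) ltac:(lra)) as HL.
  pose proof (sh_gt0 x Hx) as Hs.
  pose proof (EB x ltac:(lra)) as HB.
  pose proof (E0 x Hx) as Ha.
  pose proof (E2 x Hx) as Hc.
  pose proof (E3 x Hx) as Hb.
  assert (HA1 : 2 * sinh x * cosh x - 2 * x = 4 * A1 x) by (unfold A1; field).
  set (s := sinh x) in *. set (a0 := A0 x) in *. set (a1 := A1 x) in *. set (N := Nf r x) in *.
  set (shr := sinh (r*x)) in *.
  assert (Hc' : 0 < 3 * s * s - 2 * s * x - 4 * a1) by lra.
  assert (Hkey : (1+r) * s * (s - r*x - r^3 * (s - x)) - (3+r) * ((1 - r^2) * (a0 + r^2 * (a1 - a0)))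
     = (1 - r^2) * ((1-r)^2 * (s*s - 3*a0) + r*(1-r) * (3*s*s - s*x - 7*a0)
         + r^2 * (3*s*s - 2*s*x - 4*a1) + r^2*(1-r)*(a1 - a0))) by ring.
  assert (Hpos : 0 < (1-r)^2 * (s*s - 3*a0) + r*(1-r) * (3*s*s - s*x - 7*a0)
         + r^2 * (3*s*s - 2*s*x - 4*a1) + r^2*(1-r)*(a1 - a0)).
  { assert (0 < (1-r)^2 * (s*s - 3*a0)) by (apply Rmult_lt_0_compat; nra).
    assert (0 < r*(1-r) * (3*s*s - s*x - 7*a0)) by (apply Rmult_lt_0_compat; nra).
    assert (0 < r^2 * (3*s*s - 2*s*x - 4*a1)) by (apply Rmult_lt_0_compat; nra).
    assert (0 <= r^2*(1-r)*(a1 - a0)) by (apply Rmult_le_pos; nra).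
    lra. }
  assert (0 < 1 - r^2) by nra.
  assert (0 < (1 - r^2) * ((1-r)^2 * (s*s - 3*a0) + r*(1-r) * (3*s*s - s*x - 7*a0)
         + r^2 * (3*s*s - 2*s*x - 4*a1) + r^2*(1-r)*(a1 - a0))) by (apply Rmult_lt_0_compat; lra).
  assert ((3 + r) * N <= (3+r) * ((1 - r^2) * (a0 + r^2 * (a1 - a0)))) by (apply Rmult_le_compat_l; lra).
  assert ((1+r) * s * (s - r*x - r^3 * (s - x)) <= (1 + r) * s * (s - shr)).
  { apply Rmult_le_compat_l; [nra| lra]. }
  lra.
Qed.

Lemma core_bnonneg r x C bb : 0 < r < 1 -> 0 < x -> 1/2 <= C -> 0 <= bb ->
  0 < 4 * C * (sinh x * sinh x) - 2 * sinh x * (sinh (r*x) / r) + bb * Nf r x.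
Proof.
  intros Hr Hx HC Hbb.
  pose proof (Lh_strict r x Hr Hx). pose proof (sh_gt0 x Hx). pose proof (Nf_ge0 r x ltac:(lra) ltac:(lra)).
  assert (sinh (r*x) / r < sinh x) by (apply Rmult_lt_reg_r with r; [lra|]; field_simplify; lra).
  assert (0 <= bb * Nf r x) by (apply Rmult_le_pos; lra).
  assert (0 < sinh x * (sinh x - sinh (r*x) / r)) by (apply Rmult_lt_0_compat; lra).
  nra.
Qed.

Lemma core_large r x C beta : 0 < r < 1 -> 0 < x -> 0 < beta ->
  let c := (1+r)/(1-r) in let d := 2/(1-r) in
  2 + 2*beta/(2+c) <= 4*C ->
  0 < 4 * C * (sinh x * sinh x) - 2 * sinh x * (sinh (r*x) / r) - beta * (d/c) * Nf r x.
Proof.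
  intros Hr Hx Hb c d HC.
  pose proof (Lh_strict r x Hr Hx). pose proof (sh_gt0 x Hx).
  pose proof (I1 r x ltac:(lra) ltac:(lra)) as HI1.
  assert (sinh (r*x) / r < sinh x) by (apply Rmult_lt_reg_r with r; [lra|]; field_simplify; lra).
  assert (0 < sinh x * (sinh x - sinh (r*x) / r)) by (apply Rmult_lt_0_compat; lra).
  assert (Hs : 0 <= 2*(sinh x * sinh x)/(2+c) - (d/c) * Nf r x).
  { assert (E : 2*(sinh x * sinh x)/(2+c) - (d/c) * Nf r x
              = 2/(3-r) * ((1 - r^2) * (sinh x * sinh x) - (3 - r) * Nf r x) / (1 + r)).
    { unfold c, d. field. repeat split; lra. }
    rewrite E. apply Rmult_le_pos; [apply Rmult_le_pos|].
    - apply Rmult_le_pos; [lra| left; apply Rinv_0_lt_compat; lra].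
    - lra.
    - left; apply Rinv_0_lt_compat; lra. }
  assert (Hss : 0 <= sinh x * sinh x) by nra.
  assert (4 * C * (sinh x * sinh x) >= (2 + 2*beta/(2+c)) * (sinh x * sinh x)) by nra.
  assert (E2' : (2 + 2*beta/(2+c)) * (sinh x * sinh x) - 2 * sinh x * (sinh (r*x) / r) - beta * (d/c) * Nf r x
     = 2 * (sinh x * (sinh x - sinh (r*x) / r)) + beta * (2*(sinh x * sinh x)/(2+c) - (d/c) * Nf r x)).
  { unfold c, d. field. repeat split; lra. }
  assert (0 <= beta * (2*(sinh x * sinh x)/(2+c) - (d/c) * Nf r x)) by (apply Rmult_le_pos; lra).
  lra.
Qed.

Lemma core_small r x C beta : 0 < r < 1 -> 0 < x -> 0 < beta ->
  let c := (1-r)/(1+r) in let d := 2/(1+r) in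
  2 + 2*beta/(2+c) <= 4*C -> 2*(1+beta)/(1+2*c) <= 4*C ->
  0 < 4 * C * (sinh x * sinh x) - 2 * sinh x * (sinh (r*x) / r) - beta * (d/c) * Nf r x.
Proof.
  intros Hr Hx Hb c d HC2 HC4.
  pose proof (Lh_strict r x Hr Hx). pose proof (sh_gt0 x Hx).
  pose proof (I1 r x ltac:(lra) ltac:(lra)) as HI1.
  pose proof (I2 r x Hr Hx) as HI2.
  set (s := sinh x) in *. set (sr := sinh (r*x)) in *. set (N := Nf r x) in *.
  assert (sr / r < s) by (apply Rmult_lt_reg_r with r; [lra|]; field_simplify; lra).
  assert (Hss : 0 <= s * s) by nra.
  set (bs := (1-r)*(3+r)/(r*(1+r))).
  assert (Hbs : 0 < bs) by (unfold bs; apply Rmult_lt_0_compat; [nra| apply Rinv_0_lt_compat; nra]).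
  set (L0 := 2 * (s * (s - sr / r))).
  set (m := 2*(s * s)/(2+c) - (d/c) * N).
  set (m4 := 2*(s*s)/(1+2*c) - (d/c) * N).
  assert (HL0 : 0 < L0) by (unfold L0; assert (0 < s * (s - sr / r)) by (apply Rmult_lt_0_compat; lra); lra).
  assert (HLs : 0 < L0 + bs * m).
  { assert (E : L0 + bs * m = 2/(r*(1+r)) * ((1 + r) * s * (s - sr) - (3 + r) * N)).
    { unfold L0, m, bs, c, d. field. repeat split; lra. }
    rewrite E. apply Rmult_lt_0_compat; [apply Rmult_lt_0_compat; [lra| apply Rinv_0_lt_compat; nra]| lra]. }
  assert (Hm4 : 0 <= m4).
  { assert (E : m4 = 2/((3-r)*(1-r)) * ((1 - r^2) * (s * s) - (3 - r) * N)).
    { unfold m4, c, d. field. repeat split; lra. }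
    rewrite E. apply Rmult_le_pos; [apply Rmult_le_pos; [lra| left; apply Rinv_0_lt_compat; nra]| lra]. }
  destruct (Rle_or_lt beta bs) as [Hle|Hgt].
  - assert (4 * C * (s * s) >= (2 + 2*beta/(2+c)) * (s * s)) by nra.
    assert (E : (2 + 2*beta/(2+c)) * (s * s) - 2 * s * (sr / r) - beta * (d/c) * N = L0 + beta * m).
    { unfold L0, m, c, d. field. repeat split; lra. }
    assert (0 < L0 + beta * m).
    { assert (Eq : L0 + beta * m = ((bs - beta) * L0 + beta * (L0 + bs * m)) / bs) by (field; lra).
      rewrite Eq. apply Rdiv_lt_0_compat; [|lra].
      assert (0 <= (bs - beta) * L0) by (apply Rmult_le_pos; lra).
      assert (0 < beta * (L0 + bs * m)) by (apply Rmult_lt_0_compat; lra). lra. }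
    lra.
  - assert (4 * C * (s * s) >= (2*(1+beta)/(1+2*c)) * (s * s)) by nra.
    assert (E : (2*(1+beta)/(1+2*c)) * (s * s) - 2 * s * (sr / r) - beta * (d/c) * N
                = (L0 + bs * m) + (beta - bs) * m4).
    { unfold L0, m, m4, bs, c, d. field. repeat split; lra. }
    assert (0 <= (beta - bs) * m4) by (apply Rmult_le_pos; lra).
    lra.
Qed.

Definition sgm (e t : R) : R := if Req_EM_T e 0 then t/2 else sinh (e*t/2)/e.

Lemma d_sgm (e t : R) : is_derive (sgm e) t (cosh (e*t/2)/2).
Proof.
  unfold sgm. destruct (Req_EM_T e 0) as [He|He].
  - subst. replace (0 * t / 2) with 0 by field. rewrite cosh_0.
    apply (dext (fun t => t/2) _ t (1/2) (1/2)); [intros; reflexivity | reflexivity | ]. auto_derive; auto; try field.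
  - unfold sinh, cosh. auto_derive; auto. unfold Rdiv. field. auto.
Qed.

Lemma e_sgm e t : e * sgm e t = sinh (e*t/2).
Proof.
  unfold sgm. destruct (Req_EM_T e 0) as [He|He].
  - subst. replace (0 * t / 2) with 0 by field. rewrite sinh_0. ring.
  - field. auto.
Qed.

Lemma Hpos a b C t : a < 0 -> 1/2 <= C -> (2 - a - b)/(2*(2-a)) <= C ->
  (1 - b)/(2*(1-2*a)) <= C -> 0 < t ->
  0 < 2*C*((cosh ((1-a)*t) - 1)/(1-a)^2)
      - (2 * sinh ((1-a)*t/2) * sgm (1+a) t / (1-a)
         - b * (((1-a) * cosh ((1-a)*t/2) * sgm (1+a) t - sinh ((1-a)*t/2) * cosh ((1+a)*t/2)) / ((-a)*(1-a)))).
Proof.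
  intros Ha HC1 HC2 HC4 Ht.
  set (d := 1 - a). set (c := -a). set (e := 1 + a).
  assert (Hd : 0 < d) by (unfold d; lra). assert (Hc : 0 < c) by (unfold c; lra).
  set (x := d*t/2).
  assert (Hx : 0 < x) by (unfold x; nra).
  assert (Hch : cosh (d*t) = 1 + 2 * sinh x * sinh x) by (rewrite <- ch2x; unfold x; f_equal; field).
  rewrite Hch.
  pose proof (sh_gt0 x Hx) as Hs.
  destruct (Req_EM_T e 0) as [He|He].
  -
    assert (Ha1 : a = -1) by (unfold e in He; lra).
    assert (Hsig : sgm e t = x/2).
    { unfold sgm. destruct (Req_EM_T e 0); [|contradiction]. unfold x, d. rewrite Ha1. field. }
    assert (Hce : cosh (e*t/2) = 1) by (rewrite He; replace (0*t/2) with 0 by field; apply cosh_0).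
    rewrite Hsig, Hce. unfold c, d. rewrite Ha1. unfold d in x. 
    replace ((1 - -1) * t / 2) with x by (unfold x, d; rewrite Ha1; field).
    pose proof (sh_ge_3 x ltac:(lra)). pose proof (tanh_le x ltac:(lra)).
    assert (0 < x^3) by (apply pow_lt; lra).
    assert (x < sinh x) by lra.
    destruct (Rle_or_lt 0 b) as [Hb|Hb].
    + assert (0 <= b * (x * cosh x - sinh x)) by (apply Rmult_le_pos; lra).
      assert (0 < sinh x * (sinh x - x)) by (apply Rmult_lt_0_compat; lra).
      assert (E : 2 * C * ((1 + 2 * sinh x * sinh x - 1) / (1 - -1) ^ 2) -
        (2 * sinh x * (x / 2) / (1 - -1) - b * (((1 - -1) * cosh x * (x / 2) - sinh x * 1) / (- -1 * (1 - -1))))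
        = C * (sinh x * sinh x) - sinh x * x / 2 + b * (x * cosh x - sinh x) / 2) by field.
      rewrite E. nra.
    + pose proof (E0le x ltac:(lra)). unfold A0 in H3.
      rewrite Ha1 in HC2. assert (HC2' : (3 - b)/6 <= C) by (replace ((3 - b)/6) with ((2 - -1 - b)/(2*(2 - -1))) by field; auto).
      assert (E : 2 * C * ((1 + 2 * sinh x * sinh x - 1) / (1 - -1) ^ 2) -
        (2 * sinh x * (x / 2) / (1 - -1) - b * (((1 - -1) * cosh x * (x / 2) - sinh x * 1) / (- -1 * (1 - -1))))
        = C * (sinh x * sinh x) - sinh x * x / 2 + b * (x * cosh x - sinh x) / 2) by field.
      rewrite E.
      assert (0 < sinh x * (sinh x - x)) by (apply Rmult_lt_0_compat; lra).
      assert (0 <= sinh x * sinh x) by nra.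
      assert (C * (sinh x * sinh x) >= (3 - b)/6 * (sinh x * sinh x)) by nra.
      assert (0 <= (- b) * (sinh x * sinh x / 6 - (x * cosh x - sinh x) / 2)) by (apply Rmult_le_pos; lra).
      nra.
  - set (r := Rabs e / d).
    assert (Hed : Rabs e < d).
    { unfold e, d. destruct (Rcase_abs (1 + a)); [rewrite Rabs_left by lra| rewrite Rabs_right by lra]; lra. }
    assert (Hea : 0 < Rabs e) by (apply Rabs_pos_lt; auto).
    assert (Hr : 0 < r < 1).
    { unfold r. split; [apply Rdiv_lt_0_compat; lra|]. apply Rmult_lt_reg_r with d; [lra|].
      field_simplify; lra. }
    assert (Hsig : sgm e t = sinh (r*x) / (r*d) /\ cosh (e*t/2) = cosh (r*x)).
    { unfold sgm. destruct (Req_EM_T e 0); [contradiction|].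
      unfold r, x. destruct (Rcase_abs e) as [Hn|Hp].
      - rewrite Rabs_left by lra.
        replace (- e / d * (d * t / 2)) with (- (e*t/2)) by (field; lra).
        rewrite sh_odd, ch_even. split; [field; split; lra| reflexivity].
      - rewrite Rabs_right by lra.
        replace (e / d * (d * t / 2)) with (e*t/2) by (field; lra).
        split; [field; split; lra| reflexivity]. }
    destruct Hsig as [Hsig Hce]. rewrite Hsig, Hce.
    replace (d * t / 2) with x by reflexivity.
    assert (E : 2 * C * ((1 + 2 * sinh x * sinh x - 1) / d ^ 2) -
      (2 * sinh x * (sinh (r * x) / (r * d)) / d -
       b * ((d * cosh x * (sinh (r * x) / (r * d)) - sinh x * cosh (r * x)) / (c * d)))
      = (4 * C * (sinh x * sinh x) - 2 * sinh x * (sinh (r*x) / r) + (b * d / c) * Nf r x) / d^2).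
    { unfold Nf. field. repeat split; lra. }
    rewrite E. apply Rdiv_lt_0_compat; [| apply pow_lt; lra].
    destruct (Rle_or_lt 0 b) as [Hb|Hb].
    + apply core_bnonneg; auto. apply Rmult_le_pos; [apply Rmult_le_pos; lra| left; apply Rinv_0_lt_compat; lra].
    + set (beta := - b).
      assert (Hbeta : 0 < beta) by (unfold beta; lra).
      replace (b * d / c) with (- (beta * (d / c))) by (unfold beta; field; lra).
      assert (HT2 : 2 + 2*beta/(2+c) <= 4*C).
      { replace (2 + 2*beta/(2+c)) with (4 * ((2 - a - b)/(2*(2-a)))) by (unfold beta, c; field; lra). lra. }
      assert (HT4 : 2*(1+beta)/(1+2*c) <= 4*C).
      { replace (2*(1+beta)/(1+2*c)) with (4 * ((1 - b)/(2*(1-2*a)))) by (unfold beta, c; field; lra). lra. }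
      destruct (Rcase_abs e) as [Hn|Hp].
      * assert (Hre : r = - e / d) by (unfold r; rewrite Rabs_left by lra; reflexivity).
        assert (Hc' : c = (1+r)/(1-r)) by (rewrite Hre; unfold c, d, e; field; lra).
        assert (Hd' : d / c = (2/(1-r)) / ((1+r)/(1-r))) by (rewrite Hre; unfold c, d, e; field; repeat split; lra).
        pose proof (core_large r x C beta Hr Hx Hbeta) as K. cbv zeta in K.
        rewrite <- Hd', <- Hc' in K. specialize (K HT2).
        replace (4 * C * (sinh x * sinh x) - 2 * sinh x * (sinh (r * x) / r) + - (beta * (d / c)) * Nf r x)
          with (4 * C * (sinh x * sinh x) - 2 * sinh x * (sinh (r * x) / r) - beta * (d / c) * Nf r x) by ring.
        exact K.
      * assert (Hre : r = e / d) by (unfold r; rewrite Rabs_right by lra; reflexivity).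
        assert (Hc' : c = (1-r)/(1+r)) by (rewrite Hre; unfold c, d, e; field; lra).
        assert (Hd' : d / c = (2/(1+r)) / ((1-r)/(1+r))) by (rewrite Hre; unfold c, d, e; field; repeat split; lra).
        pose proof (core_small r x C beta Hr Hx Hbeta) as K. cbv zeta in K.
        rewrite <- Hd', <- Hc' in K. specialize (K HT2 HT4).
        replace (4 * C * (sinh x * sinh x) - 2 * sinh x * (sinh (r * x) / r) + - (beta * (d / c)) * Nf r x)
          with (4 * C * (sinh x * sinh x) - 2 * sinh x * (sinh (r * x) / r) - beta * (d / c) * Nf r x) by ring.
        exact K.
Qed.

Lemma Dop_ext l (Y Y' : R -> R) : (forall t, is_derive Y t (Y' t)) -> Dop l Y = fun t => Y' t - l * Y t.
Proof. intro H. apply functional_extensionality. intro t. unfold Dop. rewrite (is_derive_unique _ _ _ (H t)). reflexivity. Qed.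

Lemma IDn (u : R -> R) : (forall n t, ex_derive_n u n t) -> forall k t, is_derive (Derive_n u k) t (Derive_n u (S k) t).
Proof. intros Hs k t. apply Derive_correct. exact (Hs (S k) t). Qed.

Lemma ID0 (u : R -> R) : (forall n t, ex_derive_n u n t) -> forall t, is_derive u t (Derive_n u 1 t).
Proof. intros Hs t. exact (IDn u Hs 0 t). Qed.

Section Chain.
Variable u : R -> R.
Hypothesis Hs : forall n t, ex_derive_n u n t.
Variables l0 l1 l2 l3 : R.
Let D k := Derive_n u k.

Definition Y3e t := D 1%nat t - l3 * D 0%nat t.
Definition Y3d t := D 2%nat t - l3 * D 1%nat t.
Definition Y2e t := Y3d t - l2 * Y3e t.
Definition Y2d t := (D 3%nat t - l3 * D 2%nat t) - l2 * Y3d t.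
Definition Y1e t := Y2d t - l1 * Y2e t.
Definition Y1d t := ((D 4%nat t - l3 * D 3%nat t) - l2 * (D 3%nat t - l3 * D 2%nat t)) - l1 * Y2d t.

Lemma dY3 t : is_derive Y3e t (Y3d t).
Proof. unfold Y3e, Y3d, D. apply dminus; [apply IDn; auto| apply dscal; apply IDn; auto]. Qed.
Lemma dY2 t : is_derive Y2e t (Y2d t).
Proof. unfold Y2e, Y2d, Y3d. apply dminus; [apply dminus; [unfold D; apply IDn; auto| apply dscal; unfold D; apply IDn; auto]| apply dscal; apply dY3]. Qed.
Lemma dY1 t : is_derive Y1e t (Y1d t).
Proof. unfold Y1e, Y1d, Y2d. apply dminus; [apply dminus; [apply dminus; [unfold D; apply IDn; auto| apply dscal; unfold D; apply IDn; auto]| apply dscal; apply dminus; [unfold D; apply IDn; auto| apply dscal; unfold D; apply IDn; auto]]| apply dscal; apply dY2]. Qed.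

Lemma chain_eqs : Dop l3 u = Y3e /\ Dop l2 (Dop l3 u) = Y2e /\ Dop l1 (Dop l2 (Dop l3 u)) = Y1e.
Proof.
  assert (E3 : Dop l3 u = Y3e).
  { rewrite (Dop_ext l3 u (D 1%nat)). reflexivity. intros t. unfold D. apply ID0; auto. }
  assert (E2 : Dop l2 (Dop l3 u) = Y2e).
  { rewrite E3. rewrite (Dop_ext l2 Y3e Y3d). reflexivity. apply dY3. }
  assert (E1 : Dop l1 (Dop l2 (Dop l3 u)) = Y1e).
  { rewrite E2. rewrite (Dop_ext l1 Y2e Y2d). reflexivity. apply dY2. }
  auto.
Qed.

Lemma chain_lop : (forall t, Lop [l0; l1; l2; l3] u t = 0) -> forall t, is_derive Y1e t (l0 * Y1e t).
Proof.
  intros HL t. specialize (HL t). simpl in HL. destruct chain_eqs as [_ [_ E1]]. rewrite E1 in HL.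
  rewrite (Dop_ext l0 Y1e Y1d) in HL by apply dY1.
  apply (dext Y1e Y1e t (Y1d t) (l0 * Y1e t)); [intros; reflexivity| lra| apply dY1].
Qed.
End Chain.

Lemma Phi1_closed (a b : R) (Phi1 : R -> R) : a < 0 -> is_fundamental [a - 1; 1 - a; 0; b] Phi1 ->
  forall t, Derive Phi1 t - b * Phi1 t = (cosh ((1-a)*t) - 1)/(1-a)^2.
Proof.
  intros Ha [Hs [HL [Hi Hi3']]]. assert (Hi3 : Derive_n Phi1 3 0 = 1) by exact Hi3'.
  assert (H0 : Derive_n Phi1 0 0 = 0) by (apply Hi; simpl; lia).
  assert (H1 : Derive_n Phi1 1 0 = 0) by (apply Hi; simpl; lia).
  assert (H2 : Derive_n Phi1 2 0 = 0) by (apply Hi; simpl; lia).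
  pose proof (chain_lop Phi1 Hs (a-1) (1-a) 0 b HL) as HW.
  set (W := Y1e Phi1 (1-a) 0 b) in *.
  assert (HW0 : W 0 = 1).
  { unfold W, Y1e, Y2d, Y2e, Y3d, Y3e. rewrite H0, H1, H2, Hi3. ring. }
  assert (HWc : forall t, W t = exp ((a-1)*t)).
  { apply (uniq1 W (fun t => exp ((a-1)*t)) (fun _ => 0) (a-1)).
    - intros t. rewrite Rplus_0_r. apply HW.
    - intros t. auto_derive; auto. ring.
    - rewrite HW0, Rmult_0_r, exp_0. reflexivity. }
  set (d := 1 - a) in *.
  assert (HVc : forall t, Y2e Phi1 0 b t = sinh (d*t)/d).
  { apply (uniq1 (Y2e Phi1 0 b) (fun t => sinh (d*t)/d) (fun t => exp ((a-1)*t)) (1-a)).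
    - intros t. apply (dext (Y2e Phi1 0 b) (Y2e Phi1 0 b) t (Y2d Phi1 0 b t)); [intros; reflexivity| |apply dY2; auto].
      rewrite <- HWc. unfold W, Y1e. unfold d. ring.
    - intros t. unfold sinh. auto_derive; auto. unfold d. replace ((a-1)*t) with (-((1-a)*t)) by ring.
      field. unfold d in *; lra.
    - unfold Y2e, Y3d, Y3e. rewrite H0, H1, H2. replace (d * 0) with 0 by ring. rewrite sinh_0. field. unfold d in *; lra. }
  assert (HGc : forall t, Y3e Phi1 b t = (cosh (d*t) - 1)/d^2).
  { apply (uniq1 (Y3e Phi1 b) (fun t => (cosh (d*t) - 1)/d^2) (fun t => sinh (d*t)/d) 0).
    - intros t. apply (dext (Y3e Phi1 b) (Y3e Phi1 b) t (Y3d Phi1 b t)); [intros; reflexivity| |apply dY3; auto].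
      rewrite <- HVc. unfold Y2e. ring.
    - intros t. unfold sinh, cosh. auto_derive; auto. field. unfold d in *; lra.
    - unfold Y3e. rewrite H0, H1. replace (d * 0) with 0 by ring. rewrite cosh_0. field. unfold d in *; lra. }
  intros t. rewrite <- HGc. unfold Y3e. reflexivity.
Qed.

Lemma exp_ident (a t : R) : exp t - exp (a*t) = 2 * sinh ((1-a)*t/2) * (cosh ((1+a)*t/2) + sinh ((1+a)*t/2)).
Proof.
  rewrite ch_p_sh. unfold sinh.
  replace (2 * ((exp ((1 - a) * t / 2) - exp (- ((1 - a) * t / 2))) / 2) * exp ((1 + a) * t / 2))
    with (exp ((1 - a) * t / 2) * exp ((1 + a) * t / 2) - exp (- ((1 - a) * t / 2)) * exp ((1 + a) * t / 2)) by field.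
  rewrite <- !exp_plus. f_equal; f_equal; field.
Qed.

Definition Phi2c (a t : R) := ((1-a) * cosh ((1-a)*t/2) * sgm (1+a) t - sinh ((1-a)*t/2) * cosh ((1+a)*t/2)) / ((-a)*(1-a)).
Definition u2c (a t : R) := 2 * sinh ((1-a)*t/2) * sgm (1+a) t / (1-a).

Lemma d_ch2 (k t : R) : is_derive (fun t => cosh (k*t/2)) t (k/2 * sinh (k*t/2)).
Proof. unfold sinh, cosh. auto_derive; auto. unfold Rdiv. field. Qed.
Lemma d_sh2 (k t : R) : is_derive (fun t => sinh (k*t/2)) t (k/2 * cosh (k*t/2)).
Proof. unfold sinh, cosh. auto_derive; auto. unfold Rdiv. field. Qed.

Lemma d_Phi2c (a t : R) : a < 0 -> is_derive (Phi2c a) t (u2c a t).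
Proof.
  intros Ha. unfold Phi2c, u2c.
  set (d := 1 - a). set (e := 1 + a).
  apply (dext (fun t => / ((-a)*d) * (d * (cosh (d*t/2) * sgm e t) - sinh (d*t/2) * cosh (e*t/2))) _ t
     (/ ((-a)*d) * (d * (d/2 * sinh (d*t/2) * sgm e t + cosh (d*t/2) * (cosh (e*t/2)/2))
                    - (d/2 * cosh (d*t/2) * cosh (e*t/2) + sinh (d*t/2) * (e/2 * sinh (e*t/2))))) _).
  - intros s. unfold d. field. lra.
  - rewrite <- (e_sgm e t). unfold d, e. field. lra.
  - apply dscal. apply dminus; [apply dscal; apply (dmult (fun t => cosh (d*t/2)) (sgm e)); [apply d_ch2| apply d_sgm]| apply (dmult (fun t => sinh (d*t/2)) (fun t => cosh (e*t/2))); [apply d_sh2| apply d_ch2]].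
Qed.

Lemma sgm0 e : sgm e 0 = 0.
Proof. unfold sgm. destruct (Req_EM_T e 0); [field| replace (e*0/2) with 0 by field; rewrite sinh_0; field; auto]. Qed.

Definition Qc (a t : R) := (exp t - exp (a*t)) / (1 - a).

Lemma d_Pc (a t : R) : a < 0 -> is_derive (fun t => u2c a t + Phi2c a t) t ((-a) * (u2c a t + Phi2c a t) + Qc a t).
Proof.
  intros Ha.
  apply (dext (fun t => u2c a t + Phi2c a t) _ t
    (2/(1-a) * ((1-a)/2 * cosh ((1-a)*t/2) * sgm (1+a) t + sinh ((1-a)*t/2) * (cosh ((1+a)*t/2)/2)) + u2c a t) _).
  - intros; reflexivity.
  - unfold Qc. rewrite exp_ident. rewrite <- (e_sgm (1+a) t). unfold u2c, Phi2c. field. lra.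
  - apply dplus; [| apply d_Phi2c; auto]. unfold u2c.
    apply (dext (fun t => 2/(1-a) * (sinh ((1-a)*t/2) * sgm (1+a) t)) _ t
      (2/(1-a) * ((1-a)/2 * cosh ((1-a)*t/2) * sgm (1+a) t + sinh ((1-a)*t/2) * (cosh ((1+a)*t/2)/2))) _).
    + intros s. field. lra.
    + reflexivity.
    + apply dscal. apply (dmult (fun t => sinh ((1-a)*t/2)) (sgm (1+a))); [apply d_sh2| apply d_sgm].
Qed.

Lemma Phi2_closed (a : R) (Phi2 : R -> R) : a < 0 -> is_fundamental [a; 1; -a; -1] Phi2 ->
  forall t, Phi2 t = Phi2c a t /\ Derive Phi2 t = u2c a t.
Proof.
  intros Ha [Hs [HL [Hi Hi3']]]. assert (Hi3 : Derive_n Phi2 3 0 = 1) by exact Hi3'.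
  assert (H0 : Derive_n Phi2 0 0 = 0) by (apply Hi; simpl; lia).
  assert (H1 : Derive_n Phi2 1 0 = 0) by (apply Hi; simpl; lia).
  assert (H2 : Derive_n Phi2 2 0 = 0) by (apply Hi; simpl; lia).
  pose proof (chain_lop Phi2 Hs a 1 (-a) (-1) HL) as HR.
  set (R := Y1e Phi2 1 (-a) (-1)) in *.
  assert (HR0 : R 0 = 1).
  { unfold R, Y1e, Y2d, Y2e, Y3d, Y3e. rewrite H0, H1, H2, Hi3. ring. }
  assert (HRc : forall t, R t = exp (a*t)).
  { apply (uniq1 R (fun t => exp (a*t)) (fun _ => 0) a).
    - intros t. rewrite Rplus_0_r. apply HR.
    - intros t. auto_derive; auto. ring.
    - rewrite HR0, Rmult_0_r, exp_0. reflexivity. }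
  assert (HQc : forall t, Y2e Phi2 (-a) (-1) t = Qc a t).
  { apply (uniq1 (Y2e Phi2 (-a) (-1)) (Qc a) (fun t => exp (a*t)) 1).
    - intros t. apply (dext (Y2e Phi2 (-a) (-1)) (Y2e Phi2 (-a) (-1)) t (Y2d Phi2 (-a) (-1) t)); [intros; reflexivity| |apply dY2; auto].
      rewrite <- HRc. unfold R, Y1e. ring.
    - intros t. unfold Qc. auto_derive; auto. field. lra.
    - unfold Y2e, Y3d, Y3e, Qc. rewrite H0, H1, H2. replace (a * 0) with 0 by ring. rewrite exp_0. field. lra. }
  assert (HPc : forall t, Y3e Phi2 (-1) t = u2c a t + Phi2c a t).
  { apply (uniq1 (Y3e Phi2 (-1)) (fun t => u2c a t + Phi2c a t) (Qc a) (-a)).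
    - intros t. apply (dext (Y3e Phi2 (-1)) (Y3e Phi2 (-1)) t (Y3d Phi2 (-1) t)); [intros; reflexivity| |apply dY3; auto].
      rewrite <- HQc. unfold Y2e. ring.
    - intros t. apply d_Pc; auto.
    - unfold Y3e, u2c, Phi2c. rewrite H0, H1. rewrite sgm0. replace ((1-a)*0/2) with 0 by field.
      replace ((1+a)*0/2) with 0 by field. rewrite sinh_0. field. lra. }
  assert (HP2 : forall t, Phi2 t = Phi2c a t).
  { apply (uniq1 Phi2 (Phi2c a) (fun t => u2c a t + Phi2c a t) (-1)).
    - intros t. apply (dext Phi2 Phi2 t (Derive_n Phi2 1 t)); [intros; reflexivity| |apply ID0; auto].
      rewrite <- HPc. unfold Y3e. simpl. ring.
    - intros t. apply (dext (Phi2c a) (Phi2c a) t (u2c a t)); [intros; reflexivity| ring| apply d_Phi2c; auto].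
    - unfold Phi2c. rewrite sgm0. replace ((1-a)*0/2) with 0 by field.
      replace ((1+a)*0/2) with 0 by field. rewrite sinh_0. specialize H0. simpl in H0. rewrite H0. field. lra. }
  intros t. split; auto.
  pose proof (HPc t) as Ht. unfold Y3e in Ht. simpl in Ht. change (Derive (fun x => Phi2 x) t) with (Derive Phi2 t) in Ht. rewrite (HP2 t) in Ht. lra.
Qed.

Theorem mainTheorem19 (a b : R) (ha : a < 0) (Phi1 Phi2 : R -> R) :
  is_fundamental [a - 1; 1 - a; 0; b] Phi1 ->
  is_fundamental [a; 1; - a; -1] Phi2 ->
  forall t : R, 0 < t -> 2 * Cab a b * Phi1 t - Phi2 t > 0.
Proof.
  intros HF1 HF2 t Ht.
  pose proof (Phi1_closed a b Phi1 ha HF1) as HP1.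
  pose proof (Phi2_closed a Phi2 ha HF2) as HP2.
  set (C := Cab a b).
  assert (HC1 : 1/2 <= C) by (unfold C, Cab; eapply Rle_trans; [apply Rmax_l| apply Rmax_l]).
  assert (HC2 : (2 - a - b) / (2 * (2 - a)) <= C) by (unfold C, Cab; eapply Rle_trans; [apply Rmax_r| apply Rmax_l]).
  assert (HC4 : (1 - b) / (2 * (1 - 2 * a)) <= C) by (unfold C, Cab; eapply Rle_trans; [apply Rmax_r| apply Rmax_r]).
  destruct HF1 as [Hs1 [_ [Hi1 _]]]. destruct HF2 as [Hs2 [_ [Hi2 _]]].
  assert (Hd1 : forall s, is_derive Phi1 s (Derive Phi1 s)) by (intro s; apply Derive_correct; exact (Hs1 1%nat s)).
  assert (Hd2 : forall s, is_derive Phi2 s (Derive Phi2 s)) by (intro s; apply Derive_correct; exact (Hs2 1%nat s)).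
  set (Hx := fun s => 2*C*((cosh ((1-a)*s) - 1)/(1-a)^2)
      - (2 * sinh ((1-a)*s/2) * sgm (1+a) s / (1-a)
         - b * (((1-a) * cosh ((1-a)*s/2) * sgm (1+a) s - sinh ((1-a)*s/2) * cosh ((1+a)*s/2)) / ((-a)*(1-a))))).
  set (K := fun s => (2 * C * Phi1 s - Phi2 s) * exp (- b * s)).
  assert (HK : forall s, is_derive K s (exp (- b * s) * Hx s)).
  { intro s. unfold K.
    apply (dext (fun s => (2 * C * Phi1 s - Phi2 s) * exp (- b * s)) _ s
      ((2 * C * Derive Phi1 s - Derive Phi2 s) * exp (- b * s) + (2 * C * Phi1 s - Phi2 s) * (- b * exp (- b * s))) _).
    - intros; reflexivity.
    - destruct (HP2 s) as [E1 E2]. pose proof (HP1 s) as E3.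
      replace (Derive Phi1 s) with (b * Phi1 s + (cosh ((1 - a) * s) - 1) / (1 - a) ^ 2) by lra.
      rewrite E2, E1. unfold Hx, u2c, Phi2c. ring.
    - apply (dmult (fun s => 2 * C * Phi1 s - Phi2 s) (fun s => exp (- b * s))).
      + apply dminus; [apply dscal; apply Hd1| apply Hd2].
      + auto_derive; auto. ring. }
  assert (HK0 : K 0 = 0).
  { unfold K. assert (Phi1 0 = 0) by (exact (Hi1 0%nat ltac:(simpl; lia))).
    assert (Phi2 0 = 0) by (exact (Hi2 0%nat ltac:(simpl; lia))). rewrite H, H0. ring. }
  assert (HKt : 0 < K t).
  { apply (spos_from_deriv K (fun s => exp (- b * s) * Hx s) t Ht).
    - intros y _. apply HK.
    - intros y Hy. apply Rmult_lt_0_compat; [apply exp_pos|]. unfold Hx. apply Hpos; auto; lra.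
    - lra. }
  unfold K in HKt. pose proof (exp_pos (- b * t)).
  apply Rlt_gt. apply (Rmult_lt_reg_r (exp (- b * t))); auto. lra.
Qed.
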